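(* Let $\mathfrak{g}$ be a finite-dimensional Leibniz algebra with free presentation $0\to\mathfrak{r}\to\mathfrak{f}\xrightarrow{\rho}\mathfrak{g}\to0$, let $\mathfrak{n}$ be a two-sided ideal of $\mathfrak{g}$, and let $\mathfrak{s}$ be a two-sided ideal of $\mathfrak{f}$ with $\rho(\mathfrak{s})=\mathfrak{n}$. Then $$\dim\mathcal{M}^{\mathrm{Lie}}(\mathfrak{g}/\mathfrak{n})+\dim\frac{\mathfrak{r}\cap[\mathfrak{f},\mathfrak{s}]_{\mathrm{Lie}}}{[\mathfrak{f},\mathfrak{r}]_{\mathrm{Lie}}\cap[\mathfrak{f},\mathfrak{s}]_{\mathrm{Lie}}}=\dim\mathcal{M}^{\mathrm{Lie}}(\mathfrak{g})+\dim\frac{\mathfrak{n}\cap[\mathfrak{g},\mathfrak{g}]_{\mathrm{Lie}}}{[\mathfrak{g},\mathfrak{n}]_{\mathrm{Lie}}}.$$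
   Context: Fix a field $\mathbb{K}$ with $\frac12\in\mathbb{K}$. A Leibniz algebra is a $\mathbb{K}$-vector space with a bilinear bracket satisfying $[x,[y,z]]=[[x,y],z]-[[x,z],y]$. For two-sided ideals $\mathfrak{m},\mathfrak{n}$, $[\mathfrak{m},\mathfrak{n}]_{\mathrm{Lie}}$ is the subspace spanned by all $[m,n]+[n,m]$. A free presentation is $0\to\mathfrak{r}\to\mathfrak{f}\to\mathfrak{g}\to0$ with $\mathfrak{f}$ free Leibniz. The Schur $\mathrm{Lie}$-multiplier is $\mathcal{M}^{\mathrm{Lie}}(\mathfrak{g})=\frac{\mathfrak{r}\cap[\mathfrak{f},\mathfrak{f}]_{\mathrm{Lie}}}{[\mathfrak{f},\mathfrak{r}]_{\mathrm{Lie}}}$, independent of the presentation up to isomorphism. *)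

(* Defs.v *)
From HB Require Import structures.
From mathcomp Require Import all_boot all_algebra.
Set Implicit Arguments. Unset Strict Implicit. Unset Printing Implicit Defensive.
Import GRing.Theory.
Local Open Scope ring_scope.

Definition is_leibniz {K : fieldType} {V : lmodType K} (br : V -> V -> V) : Prop :=
  (forall (a : K) (x y z : V), br (a *: x + y) z = a *: br x z + br y z) /\
  (forall (a : K) (x y z : V), br x (a *: y + z) = a *: br x y + br x z) /\
  (forall x y z : V, br x (br y z) = br (br x y) z - br (br x z) y).

Definition is_hom {K : fieldType} {V W : lmodType K}
  (brV : V -> V -> V) (brW : W -> W -> W) (f : V -> W) : Prop :=
  (forall (a : K) (x y : V), f (a *: x + y) = a *: f x + f y) /\
  (forall x y : V, f (brV x y) = brW (f x) (f y)).

Definition is_free_leibniz {K : fieldType} {F : lmodType K} (brF : F -> F -> F) : Prop :=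
  is_leibniz brF /\
  exists (X : Type) (i : X -> F),
    forall (W : lmodType K) (brW : W -> W -> W), is_leibniz brW ->
    forall phi : X -> W,
      (exists psi : F -> W, is_hom brF brW psi /\ forall x, psi (i x) = phi x) /\
      (forall psi1 psi2 : F -> W, is_hom brF brW psi1 -> is_hom brF brW psi2 ->
         (forall x, psi1 (i x) = psi2 (i x)) -> forall y, psi1 y = psi2 y).

Definition is_subspace {K : fieldType} {V : lmodType K} (S : V -> Prop) : Prop :=
  S 0 /\ forall (a : K) (x y : V), S x -> S y -> S (a *: x + y).

Definition is_ideal {K : fieldType} {V : lmodType K} (br : V -> V -> V) (S : V -> Prop) : Prop :=
  is_subspace S /\ forall x m : V, S m -> S (br x m) /\ S (br m x).

Definition span {K : fieldType} {V : lmodType K} (S : V -> Prop) : V -> Prop :=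
  fun x => exists (n : nat) (c : 'I_n -> K) (v : 'I_n -> V),
    (forall i, S (v i)) /\ x = \sum_(i < n) c i *: v i.

Definition lie_comm {K : fieldType} {V : lmodType K} (br : V -> V -> V)
  (M N : V -> Prop) : V -> Prop :=
  span (fun y => exists m n, M m /\ N n /\ y = br m n + br n m).

Definition fullset {T : Type} : T -> Prop := fun _ => True.
Definition meet {T : Type} (A B : T -> Prop) : T -> Prop := fun x => A x /\ B x.

(* dim (U / W) = d : d elements of U whose classes mod W form a basis of U/W *)
Definition has_qdim {K : fieldType} {V : lmodType K} (U W : V -> Prop) (d : nat) : Prop :=
  exists v : 'I_d -> V,
    (forall i, U (v i)) /\
    (forall c : 'I_d -> K, W (\sum_(i < d) c i *: v i) -> forall i, c i = 0) /\
    (forall u, U u -> exists c : 'I_d -> K, W (u - \sum_(i < d) c i *: v i)).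

(* dim M^Lie computed from the free presentation f with kernel r *)
Definition schur_lie_dim {K : fieldType} {F : lmodType K} (brF : F -> F -> F)
  (r : F -> Prop) (d : nat) : Prop :=
  has_qdim (meet r (lie_comm brF fullset fullset)) (lie_comm brF fullset r) d.

(* Main.v *)
Require Import Defs.
From HB Require Import structures.
From mathcomp Require Import all_boot all_algebra.
From Stdlib Require Import Classical IndefiniteDescription.
Set Implicit Arguments. Unset Strict Implicit. Unset Printing Implicit Defensive.
Import GRing.Theory.
Local Open Scope ring_scope.

Definition linm {K : fieldType} {V W : lmodType K} (f : V -> W) : Prop :=
  forall (a : K) (x y : V), f (a *: x + y) = a *: f x + f y.

Lemma linm0 (K : fieldType) (V W : lmodType K) (f : V -> W) : linm f -> f 0 = 0.
Proof.
move=> H; have := H 1 0 0; rewrite !scale1r !addr0 => h.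
by apply: (@addrI _ (f 0)); rewrite addr0 -h.
Qed.

Lemma linmD (K : fieldType) (V W : lmodType K) (f : V -> W) : linm f ->
  forall x y, f (x + y) = f x + f y.
Proof. by move=> H x y; have := H 1 x y; rewrite !scale1r. Qed.

Lemma linmZ (K : fieldType) (V W : lmodType K) (f : V -> W) : linm f ->
  forall a x, f (a *: x) = a *: f x.
Proof. by move=> H a x; have := H a x 0; rewrite !addr0 (linm0 H) addr0. Qed.

Lemma linmN (K : fieldType) (V W : lmodType K) (f : V -> W) : linm f ->
  forall x, f (- x) = - f x.
Proof. by move=> H x; rewrite -scaleN1r (linmZ H) scaleN1r. Qed.

Lemma linmB (K : fieldType) (V W : lmodType K) (f : V -> W) : linm f ->
  forall x y, f (x - y) = f x - f y.
Proof. by move=> H x y; rewrite (linmD H) (linmN H). Qed.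

Lemma linm_sum (K : fieldType) (V W : lmodType K) (f : V -> W) : linm f ->
  forall n (c : 'I_n -> K) (v : 'I_n -> V),
  f (\sum_(i < n) c i *: v i) = \sum_(i < n) c i *: f (v i).
Proof.
move=> H n c v; elim/big_rec2: _ => [|i y1 y2 _ <-]; first exact: linm0.
by rewrite H.
Qed.

Lemma linm_comp (K : fieldType) (U V W : lmodType K) (f : U -> V) (g : V -> W) :
  linm f -> linm g -> linm (fun x => g (f x)).
Proof. by move=> Hf Hg a x y; rewrite Hf Hg. Qed.

Lemma linm_id (K : fieldType) (V : lmodType K) : linm (fun x : V => x).
Proof. by []. Qed.

Lemma sub0 (K : fieldType) (V : lmodType K) (S : V -> Prop) : is_subspace S -> S 0.
Proof. by case. Qed.
Lemma subD (K : fieldType) (V : lmodType K) (S : V -> Prop) : is_subspace S ->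
  forall x y, S x -> S y -> S (x + y).
Proof. by case=> _ H x y Hx Hy; have := H 1 x y Hx Hy; rewrite scale1r. Qed.
Lemma subZ (K : fieldType) (V : lmodType K) (S : V -> Prop) : is_subspace S ->
  forall a x, S x -> S (a *: x).
Proof. by case=> H0 H a x Hx; have := H a x 0 Hx H0; rewrite addr0. Qed.
Lemma subN (K : fieldType) (V : lmodType K) (S : V -> Prop) : is_subspace S ->
  forall x, S x -> S (- x).
Proof. by move=> H x Hx; rewrite -scaleN1r; apply: subZ. Qed.
Lemma subB (K : fieldType) (V : lmodType K) (S : V -> Prop) : is_subspace S ->
  forall x y, S x -> S y -> S (x - y).
Proof. by move=> H x y Hx Hy; apply: subD => //; apply: subN. Qed.
Lemma sub_comb (K : fieldType) (V : lmodType K) (S : V -> Prop) : is_subspace S ->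
  forall n (c : 'I_n -> K) (v : 'I_n -> V), (forall i, S (v i)) ->
  S (\sum_(i < n) c i *: v i).
Proof.
move=> H n c v Hv; elim/big_ind: _ => //; first exact: sub0.
  by move=> x y; apply: subD.
by move=> i _; apply: subZ.
Qed.
Lemma sub_meet (K : fieldType) (V : lmodType K) (S T : V -> Prop) :
  is_subspace S -> is_subspace T -> is_subspace (meet S T).
Proof.
move=> HS HT; split; first by split; apply: sub0.
by move=> a x y [] ? ? [] ? ?; split; apply HS || apply HT.
Qed.
Lemma sub_full (K : fieldType) (V : lmodType K) : is_subspace (@fullset V).
Proof. by []. Qed.
Lemma sub_ker (K : fieldType) (V W : lmodType K) (f : V -> W) : linm f ->
  is_subspace (fun x => f x = 0).
Proof.
move=> H; split; first exact: linm0.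
by move=> a x y Hx Hy; rewrite H Hx Hy scaler0 addr0.
Qed.

Definition psum {K : fieldType} {V : lmodType K} (S T : V -> Prop) : V -> Prop :=
  fun x => exists a b, S a /\ T b /\ x = a + b.

Lemma sub_psum (K : fieldType) (V : lmodType K) (S T : V -> Prop) :
  is_subspace S -> is_subspace T -> is_subspace (psum S T).
Proof.
move=> HS HT; split; first by exists 0, 0; rewrite addr0; split; [apply: sub0|split; [apply: sub0|]].
move=> a x y [x1 [x2 [H1 [H2 ->]]]] [y1 [y2 [H3 [H4 ->]]]].
exists (a *: x1 + y1), (a *: x2 + y2); split; first by apply HS.
split; first by apply HT.
by rewrite scalerDr addrACA.
Qed.

Lemma split_l (m n : nat) (i : 'I_m) : split (lshift n i) = inl i.
Proof. exact: (unsplitK (inl i)). Qed.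
Lemma split_r (m n : nat) (i : 'I_n) : split (rshift m i) = inr i.
Proof. exact: (unsplitK (inr i)). Qed.

Lemma span_gen (K : fieldType) (V : lmodType K) (P : V -> Prop) x : P x -> Defs.span P x.
Proof.
move=> Px; exists 1%N, (fun _ => 1), (fun _ => x); split=> //.
by rewrite big_ord1 scale1r.
Qed.

Lemma span_sub (K : fieldType) (V : lmodType K) (P S : V -> Prop) :
  is_subspace S -> (forall x, P x -> S x) -> forall x, Defs.span P x -> S x.
Proof. by move=> HS HPS x [n [c [v [Hv ->]]]]; apply: sub_comb => // i; apply: HPS. Qed.

Lemma span_subspace (K : fieldType) (V : lmodType K) (P : V -> Prop) : is_subspace (Defs.span P).
Proof.
split; first by exists 0%N, (fun _ => 0), (fun _ => 0); split; [case|rewrite big_ord0].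
move=> a x y [n [c [v [Hv ->]]]] [m [d [w [Hw ->]]]].
exists (n + m)%N, (fun k => match split k with inl i => a * c i | inr j => d j end),
  (fun k => match split k with inl i => v i | inr j => w j end); split.
  by move=> k; case: split.
rewrite big_split_ord /= scaler_sumr; congr (_ + _); apply: eq_bigr => i _.
  by rewrite split_l scalerA.
by rewrite split_r.
Qed.

Lemma zmod6 (V : zmodType) (x1 x2 x3 y1 y2 y3 : V) :
  x1 + x2 + x3 + (y1 + y2 + y3) - (x1 + y1) = (y3 + x3) + (x2 + y2).
Proof.
apply/eqP; rewrite subr_eq; apply/eqP.
rewrite [LHS](AC (3*3) ((1*4)*(2*5)*(3*6))).
by rewrite [RHS](AC ((2*2)*2) ((5*6)*(3*4)*(2*1))).
Qed.

Lemma brl (K : fieldType) (V : lmodType K) (br : V -> V -> V) :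
  is_leibniz br -> forall z, linm (fun x => br x z).
Proof. by case=> H _ z a x y; apply: H. Qed.
Lemma brr (K : fieldType) (V : lmodType K) (br : V -> V -> V) :
  is_leibniz br -> forall z, linm (br z).
Proof. by case=> _ [H _] z a x y; apply: H. Qed.

Lemma hom_lin (K : fieldType) (V W : lmodType K) (brV : V -> V -> V) (brW : W -> W -> W) f :
  is_hom brV brW f -> linm f.
Proof. by case. Qed.

Lemma hom_comp (K : fieldType) (U V W : lmodType K) (brU : U -> U -> U) (brV : V -> V -> V)
  (brW : W -> W -> W) f g :
  is_hom brU brV f -> is_hom brV brW g -> is_hom brU brW (fun x => g (f x)).
Proof. by case=> H1 H2 [H3 H4]; split=> [a x y|x y]; rewrite ?H1 ?H3 ?H2 ?H4. Qed.

Lemma lie_sub (K : fieldType) (V : lmodType K) (br : V -> V -> V) M N :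
  is_subspace (lie_comm br M N).
Proof. exact: span_subspace. Qed.

Lemma lie_gen (K : fieldType) (V : lmodType K) (br : V -> V -> V) (M N : V -> Prop) m n :
  M m -> N n -> lie_comm br M N (br m n + br n m).
Proof. by move=> Hm Hn; apply: span_gen; exists m, n. Qed.

Lemma lie_mono (K : fieldType) (V : lmodType K) (br : V -> V -> V) (M N M' N' : V -> Prop) :
  (forall x, M x -> M' x) -> (forall x, N x -> N' x) ->
  forall x, lie_comm br M N x -> lie_comm br M' N' x.
Proof.
move=> HM HN; apply: span_sub; first exact: lie_sub.
by move=> _ [m [n [Hm [Hn ->]]]]; apply: lie_gen; auto.
Qed.

Lemma lie_ideal (K : fieldType) (V : lmodType K) (br : V -> V -> V) (M T : V -> Prop) :
  is_ideal br T -> forall x, lie_comm br M T x -> T x.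
Proof.
case=> HT HI; apply: span_sub => // _ [m [n [Hm [Hn ->]]]].
by apply: subD => //; case: (HI m n Hn).
Qed.

Lemma ker_ideal (K : fieldType) (V W : lmodType K) (brV : V -> V -> V) (brW : W -> W -> W) f :
  is_leibniz brW -> is_hom brV brW f -> is_ideal brV (fun x => f x = 0).
Proof.
move=> HW [Hl Hb]; split; first exact: sub_ker.
move=> x m Hm; rewrite !Hb Hm; split.
  exact: (linm0 (brr HW _)).
exact: (linm0 (brl HW _)).
Qed.

Lemma hom_lie (K : fieldType) (V W : lmodType K) (brV : V -> V -> V) (brW : W -> W -> W) f
  (M N : V -> Prop) (M' N' : W -> Prop) :
  is_hom brV brW f -> (forall x, M x -> M' (f x)) -> (forall x, N x -> N' (f x)) ->
  forall x, lie_comm brV M N x -> lie_comm brW M' N' (f x).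
Proof.
move=> [Hl Hb] HM HN x [k [c [v [Hv ->]]]]; rewrite (linm_sum Hl).
apply: sub_comb; first exact: lie_sub.
move=> i; case: (Hv i) => m [n [Hm [Hn ->]]].
by rewrite (linmD Hl) !Hb; apply: lie_gen; auto.
Qed.

Lemma hom_lie_lift (K : fieldType) (V W : lmodType K) (brV : V -> V -> V) (brW : W -> W -> W) f
  (M N : V -> Prop) (M' N' : W -> Prop) :
  is_hom brV brW f -> (forall y, M' y -> exists x, M x /\ f x = y) ->
  (forall y, N' y -> exists x, N x /\ f x = y) ->
  forall y, lie_comm brW M' N' y -> exists x, lie_comm brV M N x /\ f x = y.
Proof.
move=> [Hl Hb] HM HN; apply: span_sub.
  split; first by exists 0; split; [apply: sub0; apply: lie_sub| apply: linm0].
  move=> a _ _ [x [Hx <-]] [y [Hy <-]]; exists (a *: x + y); split; last exact: Hl.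
  by case: (lie_sub brV M N) => _ H; apply: H.
move=> _ [m [n [Hm [Hn ->]]]].
case: (HM m Hm) => m0 [Hm0 <-]; case: (HN n Hn) => n0 [Hn0 <-].
by exists (brV m0 n0 + brV n0 m0); split; [apply: lie_gen | rewrite (linmD Hl) !Hb].
Qed.

Lemma gen_shift (K : fieldType) (V : lmodType K) (br : V -> V -> V) (T : V -> Prop) :
  is_leibniz br -> forall m n t t', T t -> T t' ->
  lie_comm br fullset T ((br (m + t) (n + t') + br (n + t') (m + t)) - (br m n + br n m)).
Proof.
move=> HL m n t t' Ht Ht'.
rewrite (linmD (brl HL (n+t')) m t) (linmD (brr HL m) n t') (linmD (brr HL (n+t')) m t).
rewrite (linmD (brl HL m) n t') zmod6; apply: subD; first exact: lie_sub.
  exact: lie_gen.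
exact: lie_gen.
Qed.

Lemma near_id (K : fieldType) (V : lmodType K) (br : V -> V -> V) (T : V -> Prop) h :
  is_leibniz br -> is_hom br br h -> (forall x, T (h x - x)) ->
  forall x, lie_comm br fullset fullset x -> lie_comm br fullset T (h x - x).
Proof.
move=> HL [Hl Hb] HT; apply: span_sub.
  split; first by rewrite linm0 // subr0; apply: sub0; apply: lie_sub.
  move=> a x y Hx Hy; rewrite Hl opprD addrACA -scalerBr.
  by case: (lie_sub br fullset T) => _; apply.
move=> _ [m [n [_ [_ ->]]]].
rewrite (linmD Hl) !Hb.
have := gen_shift HL m n (HT m) (HT n).
by rewrite !subrKC.
Qed.

Lemma sumB_comb (K : fieldType) (V : lmodType K) n (c : 'I_n -> K) (a b : 'I_n -> V) :
  \sum_(i < n) c i *: (a i - b i) = \sum_(i < n) c i *: a i - \sum_(i < n) c i *: b i.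
Proof. by rewrite -sumrB; apply: eq_bigr => i _; rewrite scalerBr. Qed.

Lemma comb_lin (K : fieldType) (V : lmodType K) n (a : K) (c d : 'I_n -> K) (x : 'I_n -> V) :
  \sum_(i < n) (a * c i + d i) *: x i = a *: \sum_(i < n) c i *: x i + \sum_(i < n) d i *: x i.
Proof.
rewrite scaler_sumr -big_split; apply: eq_bigr => i _.
by rewrite scalerDl scalerA.
Qed.

Definition spanmod {K : fieldType} {V : lmodType K} (W : V -> Prop) n (x : 'I_n -> V) : V -> Prop :=
  fun u => exists c : 'I_n -> K, W (u - \sum_(i < n) c i *: x i).

Lemma spanmod_sub (K : fieldType) (V : lmodType K) (W : V -> Prop) n (x : 'I_n -> V) :
  is_subspace W -> is_subspace (spanmod W x).
Proof.
move=> HW; split.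
  by exists (fun _ => 0); rewrite big1 ?subr0; [apply: sub0|move=> i _; rewrite scale0r].
move=> a u v [c Hc] [d Hd]; exists (fun i => a * c i + d i).
rewrite comb_lin opprD addrACA -scalerBr.
by case: HW => _; apply.
Qed.

Lemma qdim_iso (K : fieldType) (V V' : lmodType K) (f : V -> V') (U W : V -> Prop)
  (U' W' : V' -> Prop) :
  linm f -> is_subspace U -> is_subspace W' ->
  (forall u, U u -> U' (f u)) ->
  (forall u', U' u' -> exists u, U u /\ W' (u' - f u)) ->
  (forall u, U u -> (W' (f u) <-> W u)) ->
  forall d, has_qdim U W d <-> has_qdim U' W' d.
Proof.
move=> Hf HU HW' HUU' Hsurj HW d; split.
  case=> v [Hv [Hind Hsp]]; exists (fun i => f (v i)); split; first by move=> i; apply: HUU'.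
  split.
    move=> c Hc; apply: Hind; apply/HW; first exact: sub_comb.
    by rewrite linm_sum.
  move=> u' Hu'; case: (Hsurj u' Hu') => u [Hu Hw]; case: (Hsp u Hu) => c Hc; exists c.
  have : W' (f (u - \sum_(i < d) c i *: v i)).
    by apply/HW => //; apply: subB => //; apply: sub_comb.
  rewrite linmB // linm_sum // => H2; have := subD HW' Hw H2.
  by rewrite addrA subrK.
case=> v' [Hv' [Hind Hsp]].
pose u i := proj1_sig (constructive_indefinite_description _ (Hsurj _ (Hv' i))).
have Hu i : U (u i) /\ W' (v' i - f (u i)) := proj2_sig (constructive_indefinite_description _ (Hsurj _ (Hv' i))).
exists u; split; first by move=> i; case: (Hu i).
split.
  move=> c Hc; apply: Hind.
  have H1 : W' (f (\sum_(i < d) c i *: u i)) by apply/HW => //; apply: sub_comb => // i; case: (Hu i).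
  have H2 : W' (\sum_(i < d) c i *: (v' i - f (u i))) by apply: sub_comb => // i; case: (Hu i).
  rewrite linm_sum // in H1; rewrite sumB_comb in H2.
  by rewrite -(subrKC (\sum_(i < d) c i *: f (u i)) (\sum_(i < d) c i *: v' i)); apply: subD.
move=> u0 Hu0; case: (Hsp (f u0) (HUU' _ Hu0)) => c Hc; exists c.
apply/HW; first by apply: subB => //; apply: sub_comb => // i; case: (Hu i).
have H2 : W' (\sum_(i < d) c i *: (v' i - f (u i))) by apply: sub_comb => // i; case: (Hu i).
rewrite sumB_comb in H2; rewrite linmB // linm_sum //.
have := subD HW' Hc H2.
by rewrite addrA subrK.
Qed.

Lemma qdim_ext (K : fieldType) (V : lmodType K) (U W U' W' : V -> Prop) :
  is_subspace U -> is_subspace W' ->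
  (forall u, U u <-> U' u) -> (forall u, U u -> (W' u <-> W u)) ->
  forall d, has_qdim U W d <-> has_qdim U' W' d.
Proof.
move=> HU HW' HUU HW; apply: (@qdim_iso K V V (fun x => x)) => //.
  by move=> u Hu /=; apply/HUU.
move=> u' Hu; exists u'; split; first by apply/HUU. rewrite subrr; exact: sub0.
Qed.

Lemma sum_splitm (K : fieldType) (V : lmodType K) a b (c1 : 'I_a -> K) (c2 : 'I_b -> K)
  (v : 'I_a -> V) (w : 'I_b -> V) :
  \sum_(k < a + b) (match split k with inl i => c1 i | inr j => c2 j end) *:
     (match split k with inl i => v i | inr j => w j end)
  = \sum_(i < a) c1 i *: v i + \sum_(j < b) c2 j *: w j.
Proof.
by rewrite big_split_ord; congr (_ + _); apply: eq_bigr => i _; rewrite ?split_l ?split_r.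
Qed.

Lemma qdim_add (K : fieldType) (V : lmodType K) (U M W : V -> Prop) a b :
  is_subspace U -> is_subspace M -> (forall x, M x -> U x) -> (forall x, U x -> W x -> M x) ->
  has_qdim U M a -> has_qdim M W b -> has_qdim U W (a + b).
Proof.
move=> HU HM HMU HWM [v [Hv [Hi1 Hs1]]] [w [Hw [Hi2 Hs2]]].
exists (fun k => match split k with inl i => v i | inr j => w j end); split.
  by move=> k; case: split => i; auto.
split.
  move=> c; rewrite big_split_ord /=.
  under eq_bigr do rewrite split_l.
  under [X in _ + X]eq_bigr do rewrite split_r.
  set S1 := \sum_(i < a) _; set S2 := \sum_(i < b) _ => Hc.
  have HS2 : M S2 by apply: sub_comb.
  have HS1 : U S1 by apply: sub_comb.
  have H1 : forall i, c (lshift b i) = 0.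
    apply: Hi1; have HS12 : M (S1 + S2).
      by apply: HWM => //; apply: subD => //; apply: HMU.
    by have := subB HM HS12 HS2; rewrite addrK.
  have H2 : forall j, c (rshift a j) = 0.
    apply: Hi2.
    have E : S1 = 0 by rewrite /S1 big1 // => i _; rewrite H1 scale0r.
    by rewrite E add0r in Hc.
  by move=> k; rewrite -(splitK k); case: (split k) => i /=; [apply: H1|apply: H2].
move=> u Hu; case: (Hs1 u Hu) => c1 Hc1; case: (Hs2 _ Hc1) => c2 Hc2.
exists (fun k => match split k with inl i => c1 i | inr j => c2 j end).
by rewrite sum_splitm opprD addrA.
Qed.

Lemma qdim_le (K : fieldType) (V : lmodType K) (U W : V -> Prop) a b (w : 'I_b -> V) :
  is_subspace W -> has_qdim U W a -> (forall j, U (w j)) ->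
  (forall c : 'I_b -> K, W (\sum_(j < b) c j *: w j) -> forall j, c j = 0) ->
  (b <= a)%N.
Proof.
move=> HW [v [Hv [_ Hsp]]] Hw Hind.
pose m j := proj1_sig (constructive_indefinite_description _ (Hsp _ (Hw j))).
have Hm j : W (w j - \sum_(i < a) m j i *: v i) :=
  proj2_sig (constructive_indefinite_description _ (Hsp _ (Hw j))).
pose M : 'M[K]_(b, a) := \matrix_(j, i) m j i.
have HM j i : M j i = m j i by rewrite /M mxE.
rewrite leqNgt; apply/negP => Hab.
have Hk : \rank (kermx M) != 0%N.
  rewrite mxrank_ker subn_eq0 -ltnNge.
  exact: leq_ltn_trans (rank_leq_col M) Hab.
have [j Hj] : exists j, row j (kermx M) != 0.
  apply/existsP; move: Hk; apply: contraR; rewrite negb_exists => /forallP H.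
  rewrite mxrank_eq0; apply/eqP/row_matrixP => j; rewrite row0.
  by have := H j; rewrite negbK => /eqP.
set z := row j (kermx M) in Hj.
have zM : z *m M = 0 by rewrite /z -row_mul mulmx_ker row0.
have : forall j', z 0 j' = 0.
  apply: Hind.
  have -> : \sum_(j' < b) z 0 j' *: w j' =
      \sum_(j' < b) z 0 j' *: (w j' - \sum_(i < a) m j' i *: v i)
      + \sum_(i < a) (z *m M) 0 i *: v i.
    have E : \sum_(j' < b) z 0 j' *: \sum_(i < a) m j' i *: v i =
             \sum_(i < a) (z *m M) 0 i *: v i.
      apply: (@etrans _ _ (\sum_(i < a) \sum_(j' < b) (z 0 j' * m j' i) *: v i)).
        rewrite exchange_big /=; apply: eq_bigr => j' _.
        by rewrite scaler_sumr; apply: eq_bigr => i _; rewrite scalerA.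
      apply: eq_bigr => i _; rewrite mxE scaler_suml; apply: eq_bigr => j' _.
        by rewrite HM.
    rewrite -E -big_split /=; apply: eq_bigr => j' _.
    by rewrite -scalerDr subrK.
  rewrite zM; under [X in _ + X]eq_bigr do rewrite mxE scale0r.
  rewrite big1_eq addr0; apply: sub_comb => // j'.
move=> Hz; move/eqP: Hj; apply; apply/rowP => i.
by rewrite Hz mxE.
Qed.

Lemma qdim_uniq (K : fieldType) (V : lmodType K) (U W : V -> Prop) a b :
  is_subspace W -> has_qdim U W a -> has_qdim U W b -> a = b.
Proof.
move=> HW Ha Hb; apply/eqP; rewrite eqn_leq.
case: (Ha) => v [Hv [Hi _]]; case: (Hb) => w [Hw [Hj _]].
by rewrite (qdim_le HW Hb Hv Hi) (qdim_le HW Ha Hw Hj).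
Qed.

Lemma zmodB (V : zmodType) (a b p q cc : V) :
  a - (p + q) - (b - (cc + q)) = a - b - (- cc + p).
Proof.
rewrite !opprD !opprK; apply/eqP; rewrite -subr_eq0; apply/eqP.
rewrite !opprD !opprK.
rewrite [LHS](AC (((1*2)*(1*2))*(2*2)) ((1*7)*(2*10)*(3*6)*(4*8)*(5*9))).
by rewrite /= !subrr !addNr !addr0.
Qed.

Lemma fin_qdim (K : fieldType) (V : lmodType K) k :
  forall (U W : V -> Prop) (x : 'I_k -> V), is_subspace U -> is_subspace W ->
  (forall u, U u -> spanmod W x u) -> exists d, has_qdim U W d.
Proof.
elim: k => [|k IH] U W x HU HW Hsp.
  exists 0%N, (fun _ => 0); split; first by case.
  split; first by move=> c _ [].
  by move=> u Hu; case: (Hsp u Hu) => c Hc; exists c; rewrite !big_ord0 in Hc *.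
pose U1 := meet U (spanmod W (fun i : 'I_k => x (widen_ord (leqnSn k) i))).
have HU1 : is_subspace U1 by apply: sub_meet => //; apply: spanmod_sub.
have [d' Hd'] := IH U1 W (fun i : 'I_k => x (widen_ord (leqnSn k) i)) HU1 HW (fun u Hu => proj2 Hu).
case: (classic (exists y, U y /\ ~ U1 y)) => [[y [Hy Hny]]|Hno]; last first.
  exists d'; apply: (proj1 (@qdim_ext K V U1 W U W HU1 HW _ _ d') Hd') => // u.
  split; first by case.
  by move=> Hu; apply: NNPP => Hn; apply: Hno; exists u.
exists (1 + d')%N; apply: (qdim_add HU HU1 _ _ _ Hd').
- by move=> u [].
- move=> u Hu Hw; split=> //; exists (fun _ => 0).
  by rewrite big1 ?subr0 // => i _; rewrite scale0r.
exists (fun _ => y); split; first by [].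
split.
  move=> c; rewrite big_ord1 => Hc i; rewrite (ord1 i).
  case: (eqVneq (c ord0) 0) => // Hc0; exfalso; apply: Hny.
  by have := subZ HU1 (c ord0)^-1 Hc; rewrite scalerA mulVf // scale1r.
move=> u Hu; case: (Hsp u Hu) => e He; case: (Hsp y Hy) => c Hc.
have Hcm : c ord_max != 0.
  apply/eqP => H0; apply: Hny; split => //.
  exists (fun i => c (widen_ord (leqnSn k) i)).
  by move: Hc; rewrite big_ord_recr /= H0 scale0r addr0.
pose t := e ord_max / c ord_max.
exists (fun _ => t); rewrite big_ord1; split.
  by apply: subB => //; apply: subZ.
exists (fun i => - t * c (widen_ord (leqnSn k) i) + e (widen_ord (leqnSn k) i)).
rewrite comb_lin.
have Ht : e ord_max = t * c ord_max by rewrite /t mulfVK.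
move: (subB HW He (subZ HW t Hc)); rewrite !big_ord_recr /= Ht -scalerA.
by rewrite scalerBr scalerDr zmodB scaleNr.
Qed.

Lemma free_lift (K : fieldType) (F W Q : lmodType K) (brF : F -> F -> F) (brW : W -> W -> W)
  (brQ : Q -> Q -> Q) :
  is_free_leibniz brF -> is_leibniz brW -> is_leibniz brQ ->
  forall p : W -> Q, is_hom brW brQ p -> (forall q, exists w, p w = q) ->
  forall g : F -> Q, is_hom brF brQ g ->
  exists a : F -> W, is_hom brF brW a /\ forall x, p (a x) = g x.
Proof.
move=> [_ [X [i Hu]]] HW HQ p Hp Hs g Hg.
pose phi x := proj1_sig (constructive_indefinite_description _ (Hs (g (i x)))).
have Hphi x : p (phi x) = g (i x) := proj2_sig (constructive_indefinite_description _ (Hs (g (i x)))).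
case: (Hu W brW HW phi) => [[a [Ha Hai]] _]; exists a; split => //.
case: (Hu Q brQ HQ (fun x => g (i x))) => _ Huniq.
apply: Huniq => //; first exact: hom_comp Ha Hp.
by move=> x; rewrite Hai Hphi.
Qed.

Lemma sum_pairs (K : fieldType) (V : lmodType K) m (F : 'I_m -> 'I_m -> V) :
  \sum_(i < m) \sum_(j < m) F i j =
  \sum_(t < #|{: 'I_m * 'I_m}|) F (enum_val t).1 (enum_val t).2.
Proof.
rewrite pair_big /=.
rewrite -(big_enum_val (A := predT) (fun p : 'I_m * 'I_m => F p.1 p.2)).
by apply: eq_bigl.
Qed.

Lemma fin_span_L (K : fieldType) (F : lmodType K) (G : vectType K) (brF : F -> F -> F)
  (brG : G -> G -> G) (rho : F -> G) :
  is_leibniz brF -> is_hom brF brG rho -> (forall y, exists x, rho x = y) ->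
  exists k (x : 'I_k -> F), forall u, lie_comm brF fullset fullset u ->
    spanmod (lie_comm brF fullset (fun x => rho x = 0)) x u.
Proof.
move=> HL Hr Hs.
have Hl := hom_lin Hr.
set T := (fun x => rho x = 0).
set m := \dim (fullv : {vspace G}).
set bv := vbasis (fullv : {vspace G}).
pose e (i : 'I_m) := proj1_sig (constructive_indefinite_description _ (Hs bv`_i)).
have He i : rho (e i) = bv`_i := proj2_sig (constructive_indefinite_description _ (Hs bv`_i)).
pose g (a : 'I_m -> K) := \sum_(i < m) a i *: e i.
pose ga a i := coord bv i (rho a).
have Hg a : T (a - g (ga a)).
  rewrite /T (linmB Hl) /g (linm_sum Hl).
  under eq_bigr do rewrite He.
  by rewrite -coord_vbasis ?subrr // memvf.
pose gen a b := brF a b + brF b a.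
have Hgen (a b : 'I_m -> K) : gen (g a) (g b) =
    \sum_(i < m) \sum_(j < m) (a i * b j) *: gen (e i) (e j).
  rewrite /gen /g (linm_sum (brl HL _)) (linm_sum (brl HL _)).
  under eq_bigr do rewrite (linm_sum (brr HL _)) scaler_sumr.
  under [X in _ + X]eq_bigr do rewrite (linm_sum (brr HL _)) scaler_sumr.
  rewrite [X in _ + X]exchange_big -big_split /=; apply: eq_bigr => i _.
  rewrite -big_split /=; apply: eq_bigr => j _.
  by rewrite !scalerA scalerDr (mulrC (b j)).
exists #|{: 'I_m * 'I_m}|, (fun t => gen (e (enum_val t).1) (e (enum_val t).2)).
apply: span_sub; first by apply: spanmod_sub; apply: lie_sub.
move=> _ [a [b [_ [_ ->]]]].
exists (fun t => ga a (enum_val t).1 * ga b (enum_val t).2).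
rewrite -(sum_pairs (fun i j => (ga a i * ga b j) *: gen (e i) (e j))) -Hgen.
have := gen_shift HL (g (ga a)) (g (ga b)) (Hg a) (Hg b).
by rewrite !subrKC.
Qed.

Unset Implicit Arguments.

Theorem mainTheorem8
  (K : fieldType) (Hhalf : (2%:R : K) != 0)
  (G : vectType K) (brG : G -> G -> G) (HG : is_leibniz brG)
  (F : lmodType K) (brF : F -> F -> F) (HF : is_free_leibniz brF)
  (rho : F -> G) (Hrho : is_hom brF brG rho) (Hrho_surj : forall y, exists x, rho x = y)
  (n : G -> Prop) (Hn : is_ideal brG n)
  (s : F -> Prop) (Hs : is_ideal brF s)
  (Hsn : forall y, n y <-> exists x, s x /\ rho x = y)
  (Q : lmodType K) (brQ : Q -> Q -> Q) (HQ : is_leibniz brQ)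
  (pi : G -> Q) (Hpi : is_hom brG brQ pi) (Hpi_surj : forall z, exists y, pi y = z)
  (Hpi_ker : forall y, pi y = 0 <-> n y)
  (F' : lmodType K) (brF' : F' -> F' -> F') (HF' : is_free_leibniz brF')
  (rho' : F' -> Q) (Hrho' : is_hom brF' brQ rho') (Hrho'_surj : forall z, exists x, rho' x = z) :
  let r : F -> Prop := fun x => rho x = 0 in
  let r' : F' -> Prop := fun x => rho' x = 0 in
  let P (d1 d2 d3 d4 : nat) : Prop :=
    [/\ schur_lie_dim brF' r' d1,
        has_qdim (meet r (lie_comm brF fullset s))
                 (meet (lie_comm brF fullset r) (lie_comm brF fullset s)) d2,
        schur_lie_dim brF r d3
      & has_qdim (meet n (lie_comm brG fullset fullset)) (lie_comm brG fullset n) d4] in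
  (exists d1 d2 d3 d4, P d1 d2 d3 d4) /\
  (forall d1 d2 d3 d4, P d1 d2 d3 d4 -> (d1 + d2 = d3 + d4)%N).
Proof.
move=> r r' P.
have HLF := HF.1; have HLF' := HF'.1.
have Hlr := hom_lin Hrho; have Hlpi := hom_lin Hpi; have Hlr' := hom_lin Hrho'.
have Hpr := hom_comp Hrho Hpi.
have Hlpr := hom_lin Hpr.
have Hpr_surj : forall q, exists x, pi (rho x) = q.
  by move=> q; case: (Hpi_surj q) => y <-; case: (Hrho_surj y) => x <-; exists x.
pose K0 := fun x => pi (rho x) = 0.
pose L := lie_comm brF fullset fullset.
pose L' := lie_comm brF' fullset fullset.
pose A := lie_comm brF fullset r.
pose A' := lie_comm brF' fullset r'.
pose B := lie_comm brF fullset s.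
pose C := lie_comm brF fullset K0.
pose R := meet r L.
pose U := meet K0 L.
pose AB := psum A B.
pose E := psum B R.
pose D := psum A (meet R B).
have Sr : is_subspace r by apply: sub_ker.
have Sr' : is_subspace r' by apply: sub_ker.
have SK0 : is_subspace K0 by apply: sub_ker.
have SL : is_subspace L by apply: lie_sub.
have SL' : is_subspace L' by apply: lie_sub.
have SA : is_subspace A by apply: lie_sub.
have SA' : is_subspace A' by apply: lie_sub.
have SB : is_subspace B by apply: lie_sub.
have SC : is_subspace C by apply: lie_sub.
have SR : is_subspace R by apply: sub_meet.
have SU : is_subspace U by apply: sub_meet.
have SAB : is_subspace AB by apply: sub_psum.
have SE : is_subspace E by apply: sub_psum.
have SD : is_subspace D by apply: sub_psum => //; apply: sub_meet.
have Ir : is_ideal brF r by apply: ker_ideal HG Hrho.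
have Ar x : A x -> r x by move=> Hx; exact: (lie_ideal Ir Hx).
have AL x : A x -> L x by apply: lie_mono.
have AR x : A x -> R x by move=> Hx; split; [apply: Ar|apply: AL].
have BL x : B x -> L x by apply: lie_mono.
have sK0 x : s x -> K0 x by move=> Hx; apply/Hpi_ker/Hsn; exists x.
have Bs x : B x -> s x by move=> Hx; exact: (lie_ideal Hs Hx).
have BK0 x : B x -> K0 x by move=> /Bs /sK0.
have rK0 x : r x -> K0 x by move=> Hx; rewrite /K0 Hx linm0.
have CAB x : C x -> AB x.
  apply: span_sub => // _ [m [k [_ [Hk ->]]]].
  have [s0 [Hs0 Hs0k]] : exists s0, s s0 /\ rho s0 = rho k by apply/Hsn/Hpi_ker.
  exists (brF m (k - s0) + brF (k - s0) m), (brF m s0 + brF s0 m); split.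
    apply: lie_gen => //; rewrite /r (linmB Hlr) Hs0k subrr //.
  split; first exact: lie_gen.
  rewrite addrACA -(linmD (brr HLF m)) -(linmD (brl HLF m)) subrK //.
have ABC x : AB x -> C x.
  move=> [a [b [Ha [Hb ->]]]]; apply: subD => //.
    by apply: lie_mono Ha.
  by apply: lie_mono Hb => // y /sK0.
have [k [fam Hfam]] := fin_span_L HLF Hrho Hrho_surj.
have Hfam' (W : F -> Prop) : (forall x, A x -> W x) -> forall u, L u -> spanmod W fam u.
  by move=> HAW u /Hfam [c Hc]; exists c; apply: HAW.
have [X3 HX3] : exists d, has_qdim R A d.
  by apply: (fin_qdim (x := fam)) => // u [_ Hu]; apply: Hfam'.
have DR x : D x -> R x.
  move=> [a [b [Ha [[Hb _] ->]]]]; apply: subD => //; exact: AR.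
have [X2 HX2] : exists d, has_qdim D A d.
  by apply: (fin_qdim (x := fam)) => // u /DR [_ Hu]; apply: Hfam'.
have iso_d d : has_qdim (meet r B) (meet A B) d <-> has_qdim D A d.
  apply: (@qdim_iso K F F (fun x => x)) => //.
  - by apply: sub_meet.
  - move=> u [Hr Hb]; exists 0, u; split; first exact: sub0.
    by split; [split; [split|]|rewrite add0r] => //; apply: BL.
  - move=> _ [a [x [Ha [[[Hx _] Hb] ->]]]]; exists x; split; first by split.
    by rewrite addrK.
  - by move=> u [_ Hb]; split; [move=> Ha; split|case].
have [X1 HX1] : exists d, has_qdim U AB d.
  apply: (fin_qdim (x := fam)) => // u [_ Hu]; apply: Hfam' => // x Hx.
  by exists x, 0; split; [|split; [apply: sub0|rewrite addr0]].
have [al [Hal Hal']] := free_lift HF' HLF HQ Hpr Hpr_surj Hrho'.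
have [be [Hbe Hbe']] := free_lift HF HLF' HQ Hrho' Hrho'_surj Hpr.
have Hlal := hom_lin Hal; have Hlbe := hom_lin Hbe.
have iso_1 d : has_qdim (meet r' L') A' d <-> has_qdim U AB d.
  apply: (qdim_iso Hlal) => //.
  - by apply: sub_meet.
  - move=> u [Hr Hu]; split; first by rewrite /K0 Hal'.
    exact: (hom_lie Hal _ _ Hu).
  - move=> u' [Hk Hu']; exists (be u'); split.
      split; first by rewrite /r' Hbe'.
      exact: (hom_lie Hbe _ _ Hu').
    have H1 : C (al (be u') - u').
      apply: (near_id HLF (hom_comp Hbe Hal)) => // x.
      by rewrite /K0 (linmB Hlpr) Hal' Hbe' subrr.
    by rewrite -opprB; apply: subN => //; apply: CAB.
  - move=> u [Hr Hu]; split.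
      move=> /ABC Hc.
      have H1 : A' (be (al u)) by apply: (hom_lie Hbe _ _ Hc) => // x Hx; rewrite /r' Hbe'.
      have H2 : A' (be (al u) - u).
        apply: (near_id HLF' (hom_comp Hal Hbe)) => // x.
        by rewrite /r' (linmB Hlr') Hbe' Hal' subrr.
      by have := subB SA' H1 H2; rewrite opprB addrC subrK.
    move=> Ha; apply: CAB; apply: (hom_lie Hal _ _ Ha) => // x Hx.
    by rewrite /K0 Hal'.
have [X4 HX4] : exists d, has_qdim U E d.
  apply: (fin_qdim (x := fam)) => // u [_ Hu]; apply: Hfam' => // x Hx.
  by exists 0, x; split; [apply: sub0|split; [apply: AR|rewrite add0r]].
have SLG : is_subspace (lie_comm brG fullset n) by apply: lie_sub.
have iso_4 d : has_qdim U E d <->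
    has_qdim (meet n (lie_comm brG fullset fullset)) (lie_comm brG fullset n) d.
  apply: (qdim_iso Hlr) => //.
  - move=> u [Hk Hu]; split; first by apply/Hpi_ker.
    exact: (hom_lie Hrho _ _ Hu).
  - move=> y [Hy Hly].
    have [x [Hx Hxy]] : exists x, L x /\ rho x = y.
      apply: (hom_lie_lift Hrho _ _ Hly) => z _; case: (Hrho_surj z) => x Hx; by exists x.
    exists x; split; last by rewrite Hxy subrr; apply: sub0.
    by split=> //; rewrite /K0 Hxy; apply/Hpi_ker.
  - move=> u [Hk Hu]; split.
      move=> Hl.
      have [b [Hb Hbu]] : exists b, B b /\ rho b = rho u.
        apply: (hom_lie_lift Hrho _ _ Hl).
          by move=> z _; case: (Hrho_surj z) => x Hx; exists x.
        by move=> z /Hsn.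
      exists b, (u - b); split=> //; split; last by rewrite addrC subrK.
      split; first by rewrite /r (linmB Hlr) Hbu subrr.
      by apply: subB => //; apply: BL.
    move=> [b [x [Hb [[Hx _] ->]]]]; rewrite (linmD Hlr) Hx addr0.
    apply: (hom_lie Hrho _ _ Hb) => // z Hz; by apply/Hsn; exists z.
have [Z HZ] : exists d, has_qdim R D d.
  apply: (fin_qdim (x := fam)) => // u [_ Hu]; apply: Hfam' => // x Hx.
  exists x, 0; split=> //; split; last by rewrite addr0.
  by apply: sub0; apply: sub_meet.
have iso_c d : has_qdim R D d <-> has_qdim E AB d.
  apply: (@qdim_iso K F F (fun x => x)) => //.
  - by move=> u Hu; exists 0, u; split; [apply: sub0|split; [|rewrite add0r]].
  - move=> _ [b [x [Hb [Hx ->]]]]; exists x; split=> //.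
    by rewrite addrK; exists 0, b; split; [apply: sub0|split; [|rewrite add0r]].
  - move=> u [Hr Hu]; split.
      move=> [a [b [Ha [Hb Hab]]]]; exists a, b; split=> //; split=> //.
      have Hb' : b = u - a by rewrite Hab (addrC a) addrK.
      split; [split|exact: Hb]; rewrite Hb'; apply: subB => //; [apply: Ar|apply: AL] => //.
    by move=> [a [x [Ha [[_ Hb] ->]]]]; exists a, x.
have EU x : E x -> U x.
  move=> [b [y [Hb [[Hy Hly] ->]]]]; split; first by apply: subD => //; [apply: BK0|apply: rK0].
  by apply: subD => //; apply: BL.
split.
  have [d1 Hd1] : exists d, has_qdim (meet r' L') A' d by exists X1; apply/iso_1.
  have [d4 Hd4] : exists d, has_qdim (meet n (lie_comm brG fullset fullset))
      (lie_comm brG fullset n) d by exists X4; apply/iso_4.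
  have [d2 Hd2] : exists d, has_qdim (meet r B) (meet A B) d by exists X2; apply/iso_d.
  by exists d1, d2, X3, d4; split.
move=> d1 d2 d3 d4 [H1 H2 H3 H4].
have {}H1 : has_qdim U AB d1 by apply/iso_1.
have {}H2 : has_qdim D A d2 by apply/iso_d.
have {}H4 : has_qdim U E d4 by apply/iso_4.
have HZ' : has_qdim E AB Z by apply/iso_c.
have H5 : has_qdim U AB (d4 + Z).
  apply: (qdim_add SU SE EU _ H4 HZ') => x _ [a [b [Ha [Hb ->]]]].
  by exists b, a; split=> //; split; [apply: AR|rewrite addrC].
have H6 : has_qdim R A (Z + d2).
  apply: (qdim_add SR SD DR _ HZ H2) => x _ Ha.
  exists x, 0; split=> //; split; last by rewrite addr0.
  by apply: sub0; apply: sub_meet.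
rewrite (qdim_uniq SAB H1 H5) (qdim_uniq SA H3 H6).
by rewrite -addnA addnC.
Qed.
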